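(* Let $t$ be a positive integer. The following are equivalent: (i) for every set $\{G_1,\dots,G_t\}$ of $t$ graphs from $GRA_\omega$ there exists a graph $G \in GRA_\omega$ such that for every $i=1,\dots,t$ the graphs $G$ and $G_i$ are independent (i.e. $G \not\to G_i$ and $G_i \not\to G$); (ii) $t = 1$.
   Context: All graphs are simple, undirected and loopless. A homomorphism $G \to G'$ is a vertex map preserving edges; $G \to G'$ means one exists. $K_\omega$ denotes the countably infinite complete graph. $GRA_\omega$ denotes the class of all countable non-bipartite graphs that do not contain $K_\omega$ as a subgraph. Two graphs are independent if there is no homomorphism between them in either direction. *)

(* Defs.v *)
From Stdlib Require Import Arith.

(* A countable simple undirected loopless graph: vertex set V ⊆ ℕ (every
   countable graph, finite or infinite, is isomorphic to one of these),
   symmetric irreflexive adjacency between vertices. *)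
Record graph := Graph {
  vert : nat -> Prop;
  adj : nat -> nat -> Prop;
  adj_sym : forall x y, adj x y -> adj y x;
  adj_irrefl : forall x, ~ adj x x;
  adj_vert : forall x y, adj x y -> vert x
}.

Definition is_hom (G H : graph) (f : nat -> nat) : Prop :=
  (forall x, vert G x -> vert H (f x)) /\
  (forall x y, adj G x y -> adj H (f x) (f y)).

Definition hom (G H : graph) : Prop := exists f, is_hom G H f.

Definition bipartite (G : graph) : Prop :=
  exists c : nat -> bool, forall x y, adj G x y -> c x <> c y.

Definition contains_Komega (G : graph) : Prop :=
  exists g : nat -> nat,
    (forall n, vert G (g n)) /\
    (forall n m, n <> m -> g n <> g m) /\
    (forall n m, n <> m -> adj G (g n) (g m)).

Definition GRA_omega (G : graph) : Prop :=
  ~ bipartite G /\ ~ contains_Komega G.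

Definition independent (G H : graph) : Prop := ~ hom G H /\ ~ hom H G.

(* Main.v *)
Require Import Defs.
From Stdlib Require Import Arith Lia List Cantor Classical ClassicalEpsilon FinFun.
Import ListNotations.


Fixpoint code (l : list nat) : nat :=
  match l with [] => 0 | a :: r => S (Cantor.to_nat (a, code r)) end.

Lemma code_inj : forall l l', code l = code l' -> l = l'.
Proof.
  induction l as [|a l IH]; destruct l' as [|b l']; cbn [code]; intros H; try discriminate; auto.
  assert (Heq : (a, code l) = (b, code l')).
  { rewrite <- (Cantor.cancel_of_to (a, code l)), <- (Cantor.cancel_of_to (b, code l')).
    f_equal. congruence. }
  injection Heq as -> Heq. f_equal. auto.
Qed.

Lemma code_gt a r : a < code (a :: r) /\ code r < code (a::r).
Proof. cbn [code]; pose proof (Cantor.to_nat_non_decreasing a (code r)); lia. Qed.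

Lemma code_surj : forall n, exists l, code l = n.
Proof.
  intro n. induction n as [n IH] using (well_founded_induction lt_wf).
  destruct n as [|p]. exists []; reflexivity.
  destruct (Cantor.of_nat p) as [a y] eqn:E.
  pose proof (Cantor.cancel_to_of p) as Hp. rewrite E in Hp.
  pose proof (Cantor.to_nat_non_decreasing a y).
  destruct (IH y) as [l Hl]. lia.
  exists (a :: l). cbn [code]. rewrite Hl, Hp. reflexivity.
Qed.

Definition dec (n : nat) : list nat :=
  match excluded_middle_informative (exists l, code l = n) with
  | left H => proj1_sig (constructive_indefinite_description _ H)
  | right _ => [] end.

Lemma code_dec n : code (dec n) = n.
Proof.
  unfold dec. destruct excluded_middle_informative as [H|H].
  - destruct constructive_indefinite_description; simpl; auto.
  - exfalso; apply H, code_surj.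
Qed.

Lemma dec_code l : dec (code l) = l.
Proof. apply code_inj. apply code_dec. Qed.

Lemma In_code_lt a r : In a r -> a < code r.
Proof.
  induction r as [|b r IH]; cbn [In]; [tauto|].
  pose proof (code_gt b r) as Hg. intros [->|Hi]; [lia|]. specialize (IH Hi); lia.
Qed.

Definition prefix (l l' : list nat) := exists r, l' = l ++ r.
Definition comp l l' := prefix l l' \/ prefix l' l.

Definition clq (H : graph) (l : list nat) :=
  (forall i, i < length l -> vert H (nth i l 0)) /\
  (forall i j, i < j -> j < length l -> adj H (nth i l 0) (nth j l 0)).

Lemma adj_neq (H : graph) a b : adj H a b -> a <> b.
Proof. intros Ha E; subst; exact (adj_irrefl H b Ha). Qed.

Lemma prefix_len l l' : prefix l l' -> length l <= length l'.
Proof. intros [r ->]; rewrite length_app; lia. Qed.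

Lemma prefix_nth l l' i : prefix l l' -> i < length l -> nth i l' 0 = nth i l 0.
Proof. intros [r ->] Hi. apply app_nth1; auto. Qed.

Lemma prefix_refl l : prefix l l.
Proof. exists []; rewrite app_nil_r; auto. Qed.

Lemma prefix_trans a b c : prefix a b -> prefix b c -> prefix a c.
Proof. intros [r ->] [s ->]. exists (r ++ s). rewrite app_assoc; auto. Qed.

Lemma comp_len_eq l l' : comp l l' -> length l = length l' -> l = l'.
Proof.
  intros [[r ->]|[r ->]] E; rewrite length_app in E;
  destruct r; simpl in E; try lia; rewrite app_nil_r; auto.
Qed.

Lemma chain_Komega H (l : nat -> list nat) :
  (forall i, clq H (l i)) -> (forall i j, comp (l i) (l j)) ->
  (forall n, exists i, n < length (l i)) -> contains_Komega H.
Proof.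
  intros Hc Hcomp Hun.
  set (io := fun n => proj1_sig (constructive_indefinite_description _ (Hun n))).
  assert (Hio : forall n, n < length (l (io n))).
  { intro n. unfold io. destruct constructive_indefinite_description; auto. }
  set (g := fun n => nth n (l (io n)) 0).
  assert (Key : forall i j, i < j -> adj H (g i) (g j)).
  { intros i j Hij. unfold g.
    destruct (Hcomp (io i) (io j)) as [Hp|Hp].
    - rewrite <- (prefix_nth _ _ i Hp (Hio i)).
      apply (proj2 (Hc (io j)) i j); auto.
    - rewrite <- (prefix_nth _ _ j Hp (Hio j)).
      apply (proj2 (Hc (io i)) i j); auto.
      pose proof (prefix_len _ _ Hp). pose proof (Hio j). lia. }
  exists g. split; [|split].
  - intro n. apply (proj1 (Hc (io n))). auto.
  - intros n m Hnm. destruct (Nat.lt_total n m) as [h|[h|h]]; [| lia |].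
    + apply (adj_neq H), Key; auto.
    + intro E; apply (adj_neq H (g m) (g n)); auto.
  - intros n m Hnm. destruct (Nat.lt_total n m) as [h|[h|h]]; [| lia |].
    + apply Key; auto.
    + apply adj_sym, Key; auto.
Qed.

Definition lvert H n := exists l, n = code l /\ clq H l.
Definition ladj H n m := exists l l', n = code l /\ m = code l' /\ clq H l /\ clq H l' /\
   comp l l' /\ l <> l'.

Lemma ladj_sym H x y : ladj H x y -> ladj H y x.
Proof.
  intros (l & l' & -> & -> & h1 & h2 & h3 & h4). exists l', l.
  split; [reflexivity|split; [reflexivity|split; [auto|split; [auto|split]]]]. unfold comp in *; tauto. auto.
Qed.
Lemma ladj_irrefl H x : ~ ladj H x x.
Proof. intros (l & l' & E & E' & _ & _ & _ & h). apply h, code_inj; congruence. Qed.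
Lemma ladj_vert H x y : ladj H x y -> lvert H x.
Proof. intros (l & l' & E & _ & h & _). exists l; auto. Qed.

Lemma ladj_intro H l l' : clq H l -> clq H l' -> comp l l' -> l <> l' -> ladj H (code l) (code l').
Proof. intros; exists l, l'; tauto. Qed.

Definition Lam (H : graph) : graph :=
  Graph (lvert H) (ladj H) (ladj_sym H) (ladj_irrefl H) (ladj_vert H).

Lemma ladj_code H l l' : ladj H (code l) (code l') ->
  clq H l /\ clq H l' /\ comp l l' /\ l <> l'.
Proof.
  intros (a & b & E & E' & h1 & h2 & h3 & h4).
  apply code_inj in E; apply code_inj in E'; subst; auto.
Qed.

Lemma Lam_Komega_free H : ~ contains_Komega H -> ~ contains_Komega (Lam H).
Proof.
  intros HK (g & Hv & Hinj & Hadj). apply HK.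
  set (L := fun n => dec (g n)).
  assert (HA : forall n m, n <> m -> clq H (L n) /\ clq H (L m) /\ comp (L n) (L m) /\ L n <> L m).
  { intros n m Hnm. specialize (Hadj n m Hnm). simpl in Hadj.
    unfold L. rewrite <- (code_dec (g n)), <- (code_dec (g m)) in Hadj.
    apply ladj_code; auto. }
  assert (Hc : forall i, clq H (L i)).
  { intro i. apply (HA i (S i)); lia. }
  assert (Hcomp : forall i j, comp (L i) (L j)).
  { intros i j. destruct (Nat.eq_dec i j) as [->|h]. left; apply prefix_refl. apply HA; auto. }
  apply (chain_Komega H L Hc Hcomp).
  assert (Hinjl : FinFun.Injective (fun i => length (L i))).
  { intros i j E. destruct (Nat.eq_dec i j) as [|h]; auto. exfalso.
    destruct (HA i j h) as (_ & _ & h3 & h4). apply h4, comp_len_eq; auto. }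
  intro N. apply NNPP; intro Hno.
  assert (Hb : forall i, length (L i) <= N).
  { intro i. apply not_gt; intro h; apply Hno; exists i; lia. }
  assert (Hnd : NoDup (map (fun i => length (L i)) (seq 0 (S (S N))))).
  { apply FinFun.Injective_map_NoDup; auto. apply seq_NoDup. }
  assert (Hincl : incl (map (fun i => length (L i)) (seq 0 (S (S N)))) (seq 0 (S N))).
  { intros x Hx. apply in_map_iff in Hx as (i & <- & _). apply in_seq. specialize (Hb i). lia. }
  pose proof (NoDup_incl_length Hnd Hincl). rewrite length_map, !length_seq in H0. lia.
Qed.

Lemma Lam_diag H : hom (Lam H) H -> contains_Komega H.
Proof.
  intros (f & Hfv & Hfa).
  set (s := fix s n := match n with 0 => [] | S n => s n ++ [f (code (s n))] end).
  assert (Hsn : forall n, s (S n) = s n ++ [f (code (s n))]) by reflexivity.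
  assert (Hl : forall n, length (s n) = n).
  { induction n. reflexivity. rewrite Hsn, length_app, IHn; simpl; lia. }
  assert (Hnth : forall n i, i < n -> nth i (s n) 0 = f (code (s i))).
  { induction n; intros i Hi. lia. rewrite Hsn. destruct (Nat.eq_dec i n) as [->|h].
    - rewrite app_nth2 by (rewrite Hl; lia). rewrite Hl, Nat.sub_diag; reflexivity.
    - rewrite app_nth1 by (rewrite Hl; lia). apply IHn; lia. }
  assert (Hpre : forall n i, i <= n -> prefix (s i) (s n)).
  { induction n; intros i Hi. replace i with 0 by lia. apply prefix_refl.
    destruct (Nat.eq_dec i (S n)) as [->|h]. apply prefix_refl.
    apply prefix_trans with (s n). apply IHn; lia. rewrite Hsn. eexists; eauto. }
  assert (Hneq : forall i j, i <> j -> s i <> s j).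
  { intros i j h E. apply h. rewrite <- (Hl i), <- (Hl j), E. auto. }
  assert (Hc : forall n, clq H (s n)).
  { intro n. induction n as [n IH] using (well_founded_induction lt_wf). split.
    - intros i Hi. rewrite Hl in Hi. rewrite Hnth by auto. apply Hfv. exists (s i); auto.
    - intros i j Hij Hj. rewrite Hl in Hj. rewrite !Hnth by lia. apply Hfa.
      apply ladj_intro. apply IH; lia. apply IH; lia.
      unfold comp; left; apply Hpre; lia. apply Hneq; lia. }
  exists (fun i => f (code (s i))). split; [|split].
  - intro n. apply Hfv. exists (s n); auto.
  - intros n m h. apply adj_neq with H. apply Hfa. apply ladj_intro; auto.
    destruct (Nat.le_ge_cases n m); unfold comp; [left|right]; apply Hpre; auto.
  - intros n m h. apply Hfa. apply ladj_intro; auto.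
    destruct (Nat.le_ge_cases n m); unfold comp; [left|right]; apply Hpre; auto.
Qed.

Lemma triangle_nonbip G a b c : adj G a b -> adj G b c -> adj G a c -> ~ bipartite G.
Proof.
  intros h1 h2 h3 [col Hc]. pose proof (Hc _ _ h1). pose proof (Hc _ _ h2). pose proof (Hc _ _ h3).
  destruct (col a), (col b), (col c); congruence.
Qed.

Lemma clq_single H u : vert H u -> clq H [u].
Proof. intro hu. split. intros i Hi; simpl in Hi. replace i with 0 by lia; auto. intros i j; simpl; lia. Qed.
Lemma clq_nil H : clq H [].
Proof. split; simpl; intros; lia. Qed.
Lemma clq_pair H u v : adj H u v -> clq H [u; v].
Proof.
  intro h. split.
  - intros i Hi; simpl in Hi. destruct i as [|[|]]; simpl; try lia.
    eapply adj_vert; eauto. eapply adj_vert, adj_sym; eauto.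
  - intros i j Hij Hj; simpl in Hj. destruct i as [|[|]], j as [|[|]]; simpl; try lia; auto.
Qed.

Lemma ladj_nil_single H u : vert H u -> ladj H (code []) (code [u]).
Proof.
  intro hu. apply ladj_intro; auto using clq_nil, clq_single.
  unfold comp; left; exists [u]; auto. discriminate.
Qed.

Lemma Lam_nonbip H u v : adj H u v -> ~ bipartite (Lam H).
Proof.
  intro h. apply (triangle_nonbip (Lam H) (code []) (code [u]) (code [u;v])); cbn [adj Lam].
  - apply ladj_nil_single. eapply adj_vert; eauto.
  - apply ladj_intro; auto using clq_single, clq_pair. apply clq_single; eapply adj_vert; eauto.
    unfold comp; left; exists [v]; auto. discriminate.
  - apply ladj_intro; auto using clq_nil, clq_pair.
    unfold comp; left; exists [u;v]; auto. discriminate.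
Qed.

Definition walk G x y n (w : nat -> nat) :=
  w 0 = x /\ w n = y /\ forall i, i < n -> adj G (w i) (w (S i)).
Definition cwalk G m (w : nat -> nat) :=
  (forall i, i < m -> adj G (w i) (w (S i))) /\ w m = w 0.

Lemma hom_cwalk G H f m w : is_hom G H f -> cwalk G m w -> cwalk H m (fun i => f (w i)).
Proof. intros [_ Hf] [Hw E]. split. intros; apply Hf; auto. rewrite E; auto. Qed.

Lemma walk_app G x y z n m w v : walk G x y n w -> walk G y z m v ->
  walk G x z (n + m) (fun i => if i <=? n then w i else v (i - n)).
Proof.
  intros (w0 & wn & Hw) (v0 & vm & Hv). split; [|split].
  - simpl. auto.
  - destruct (Nat.leb_spec (n + m) n).
    + replace m with 0 in * by lia. rewrite Nat.add_0_r. congruence.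
    + replace (n + m - n) with m by lia. auto.
  - intros i Hi. destruct (Nat.leb_spec i n); destruct (Nat.leb_spec (S i) n).
    + apply Hw; lia.
    + replace i with n by lia. rewrite Nat.sub_succ_l, Nat.sub_diag by lia.
      rewrite wn, <- v0. apply Hv. lia.
    + lia.
    + replace (S i - n) with (S (i - n)) by lia. apply Hv; lia.
Qed.

Lemma walk_rev G x y n w : walk G x y n w -> walk G y x n (fun i => w (n - i)).
Proof.
  intros (w0 & wn & Hw). split; [|split].
  - rewrite Nat.sub_0_r; auto.
  - rewrite Nat.sub_diag; auto.
  - intros i Hi. apply adj_sym. replace (n - i) with (S (n - S i)) by lia. apply Hw; lia.
Qed.

Lemma walk_edge G x y : adj G x y -> walk G x y 1 (fun i => match i with 0 => x | _ => y end).
Proof. intro h. split; [|split]; auto. intros i Hi. replace i with 0 by lia. auto. Qed.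

Lemma walk_refl G x : walk G x x 0 (fun _ => x).
Proof. split; [|split]; auto; intros; lia. Qed.

Lemma walk_cwalk G z n w : walk G z z n w -> cwalk G n w.
Proof. intros (W0 & Wn & Wi). split; auto. congruence. Qed.

Definition reach G x y := exists n w, walk G x y n w.

Lemma least_ex (P : nat -> Prop) : (exists n, P n) -> exists n, P n /\ forall m, P m -> n <= m.
Proof.
  intros [n Hn]. apply NNPP; intro Hno.
  assert (forall k, forall j, j <= k -> ~ P j).
  { induction k; intros j Hj Pj.
    - apply Hno. exists j. split; auto. intros; lia.
    - destruct (Nat.eq_dec j (S k)) as [->|h]; [|apply (IHk j); auto; lia].
      apply Hno. exists (S k). split; auto. intros m Pm.
      apply not_gt; intro; apply (IHk m); auto; lia. }
  apply (H n n); auto.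
Qed.

Lemma root_ex G x : exists z, reach G z x /\ forall m, reach G m x -> z <= m.
Proof. apply least_ex. exists x, 0, (fun _ => x). apply walk_refl. Qed.

Definition root G x := proj1_sig (constructive_indefinite_description _ (root_ex G x)).

Lemma root_spec G x : reach G (root G x) x /\ forall m, reach G m x -> root G x <= m.
Proof. unfold root. destruct constructive_indefinite_description; auto. Qed.

Lemma reach_adj G z x y : adj G x y -> reach G z x -> reach G z y.
Proof.
  intros h (n & w & Hw). eexists; eexists. eapply walk_app. exact Hw. apply walk_edge; exact h.
Qed.

Lemma root_adj G x y : adj G x y -> root G x = root G y.
Proof.
  intro h. destruct (root_spec G x) as [Rx Mx]. destruct (root_spec G y) as [Ry My].
  apply Nat.le_antisymm.
  - apply Mx. apply reach_adj with y; auto. apply adj_sym; auto.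
  - apply My. apply reach_adj with x; auto.
Qed.

Lemma nonbip_oddwalk G : ~ bipartite G -> exists m w, cwalk G m w /\ Nat.Odd m.
Proof.
  intro NB. apply NNPP; intro Hno. apply NB.
  set (c := fun x => if excluded_middle_informative
              (exists n w, walk G (root G x) x n w /\ Nat.Even n) then true else false).
  exists c. intros x y h E.
  assert (Hr : root G x = root G y) by (apply root_adj; auto).
  assert (Hw : exists a b wa wb, walk G (root G x) x a wa /\ walk G (root G x) y b wb /\ Nat.Even (a + b)).
  { unfold c in E.
    destruct excluded_middle_informative as [Hx|Hx]; destruct excluded_middle_informative as [Hy|Hy];
      try discriminate.
    - destruct Hx as (a & wa & Wa & [p Hp]). destruct Hy as (b & wb & Wb & [q Hq]).
      rewrite <- Hr in Wb. exists a, b, wa, wb. split; [exact Wa|split; [exact Wb|]]. exists (p + q); lia.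
    - destruct (proj1 (root_spec G x)) as (a & wa & Wa).
      destruct (proj1 (root_spec G y)) as (b & wb & Wb).
      destruct (Nat.Even_or_Odd a) as [ea|[p Hp]]. { exfalso; apply Hx; eauto. }
      destruct (Nat.Even_or_Odd b) as [eb|[q Hq]]. { exfalso; apply Hy; eauto. }
      rewrite <- Hr in Wb. exists a, b, wa, wb. split; [exact Wa|split; [exact Wb|]]. exists (p + q + 1); lia. }
  destruct Hw as (a & b & wa & wb & Wa & Wb & [p Hp]).
  pose proof (walk_app G _ _ _ _ _ _ _ (walk_app G _ _ _ _ _ _ _ Wa (walk_edge G x y h)) (walk_rev G _ _ _ _ Wb)) as W.
  apply Hno. exists (a + 1 + b). eexists. split.
  - apply walk_cwalk with (root G x). exact W.
  - exists p. lia.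
Qed.

Definition incr k (l : list nat) := length l = k /\ forall i j, i < j -> j < k -> nth i l 0 < nth j l 0.
Definition up (l l' : list nat) := exists b, l' = tl l ++ [b].

Definition Fvert k n := exists l, n = code l /\ incr k l.
Definition Fadj k n m := exists l l', n = code l /\ m = code l' /\ incr k l /\ incr k l' /\
  (up l l' \/ up l' l) /\ l <> l'.

Lemma Fadj_sym k x y : Fadj k x y -> Fadj k y x.
Proof.
  intros (l & l' & -> & -> & h1 & h2 & h3 & h4). exists l', l.
  split; [reflexivity|split; [reflexivity|split; [auto|split; [auto|split]]]]. tauto. auto.
Qed.
Lemma Fadj_irrefl k x : ~ Fadj k x x.
Proof. intros (l & l' & E & E' & _ & _ & _ & h). apply h, code_inj; congruence. Qed.
Lemma Fadj_vert k x y : Fadj k x y -> Fvert k x.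
Proof. intros (l & l' & E & _ & h & _). exists l; auto. Qed.

Definition Fk (k : nat) : graph :=
  Graph (Fvert k) (Fadj k) (Fadj_sym k) (Fadj_irrefl k) (Fadj_vert k).

Lemma Fadj_code k l l' : Fadj k (code l) (code l') ->
  incr k l /\ incr k l' /\ (up l l' \/ up l' l) /\ l <> l'.
Proof.
  intros (a & b & E & E' & h1 & h2 & h3 & h4).
  apply code_inj in E; apply code_inj in E'; subst; auto.
Qed.

Lemma Fadj_intro k l l' : incr k l -> incr k l' -> (up l l' \/ up l' l) -> l <> l' ->
  Fadj k (code l) (code l').
Proof. intros; exists l, l'; tauto. Qed.

Lemma nth_tl (l : list nat) i : nth i (tl l) 0 = nth (S i) l 0.
Proof. destruct l; simpl; auto. destruct i; auto. Qed.

Lemma length_tl' (l : list nat) : length (tl l) = length l - 1.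
Proof. destruct l; simpl; lia. Qed.

Lemma F_no_short_odd k m w : 2 * m + 1 <= k -> cwalk (Fk k) m w -> Nat.Odd m -> False.
Proof.
  intros Hk [Hw Hcl] [q Hq].
  set (L := fun t => dec (w t)).
  assert (Hst : forall t, t < m -> incr k (L t) /\ incr k (L (S t)) /\
                  (up (L t) (L (S t)) \/ up (L (S t)) (L t))).
  { intros t Ht. specialize (Hw t Ht). simpl in Hw.
    rewrite <- (code_dec (w t)), <- (code_dec (w (S t))) in Hw.
    apply Fadj_code in Hw. unfold L; tauto. }
  assert (Inv : forall t, t <= m -> exists j, m <= j + t /\ j <= m + t /\ Nat.Even (j + m + t) /\
                  nth j (L t) 0 = nth m (L 0) 0).
  { induction t; intros Ht.
    - exists m. repeat split; try lia. exists m; lia.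
    - destruct IHt as (j & h1 & h2 & [p hp] & h4). lia.
      destruct (Hst t) as ([Hl1 _] & [Hl2 _] & [[b Hb]|[b Hb]]). lia.
      + exists (j - 1). repeat split; try lia. exists p; lia.
        rewrite Hb, app_nth1. rewrite nth_tl. replace (S (j - 1)) with j by lia. auto.
        rewrite length_tl'. lia.
      + exists (S j). repeat split; try lia. exists (S p); lia.
        rewrite <- nth_tl, <- h4, Hb, app_nth1; auto. rewrite length_tl'. lia. }
  destruct (Inv m (le_n m)) as (j & h1 & h2 & [p hp] & h4).
  assert (LE : L m = L 0) by (unfold L; rewrite Hcl; auto).
  rewrite LE in h4.
  destruct (Hst 0) as ([_ Hinc] & _). lia.
  destruct (Nat.lt_total j m) as [h|[h|h]].
  - specialize (Hinc j m h ltac:(lia)). lia.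
  - lia.
  - specialize (Hinc m j h ltac:(lia)). lia.
Qed.

Definition smono (s : nat -> nat) := forall a b, a < b -> s a < s b.
Definition sinc (idx : list nat) := forall i j, i < j -> j < length idx -> nth i idx 0 < nth j idx 0.

Lemma smono_le s a b : smono s -> a <= b -> s a <= s b.
Proof. intros Hs h. destruct (Nat.eq_dec a b) as [->|h']; auto. apply Nat.lt_le_incl, Hs; lia. Qed.

Lemma smono_ge s i : smono s -> i <= s i.
Proof. intro Hs. induction i; [lia|]. specialize (Hs i (S i) ltac:(lia)). lia. Qed.

Lemma inf_pigeon (bb : nat -> bool) : exists b rho, smono rho /\ forall j, bb (rho j) = b.
Proof.
  destruct (classic (forall N, exists n, N <= n /\ bb n = true)) as [HA|HA].
  - set (nxt := fun N => proj1_sig (constructive_indefinite_description _ (HA N))).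
    assert (Hn : forall N, N <= nxt N /\ bb (nxt N) = true).
    { intro N; unfold nxt; destruct constructive_indefinite_description; auto. }
    set (rho := fix rho j := match j with 0 => nxt 0 | S j => nxt (S (rho j)) end).
    exists true, rho. split.
    + assert (forall j, rho j < rho (S j)).
      { intro j. simpl. pose proof (Hn (S (rho j))). lia. }
      intros a b h. induction h. auto. specialize (H m). lia.
    + intro j; destruct j; simpl; apply Hn.
  - apply not_all_ex_not in HA as [N HN].
    exists false, (fun j => N + j). split.
    + intros a b h; lia.
    + intro j. destruct (bb (N + j)) eqn:E; auto. exfalso; apply HN. exists (N + j); split; auto; lia.
Qed.

Lemma nth_map_lt (f : nat -> nat) l p : p < length l -> nth p (map f l) 0 = f (nth p l 0).
Proof. intro h. rewrite (nth_indep _ 0 (f 0)) by (rewrite length_map; lia). apply map_nth. Qed.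

Definition RamseyP k := forall c : list nat -> bool, exists s, smono s /\ exists b,
  forall idx, length idx = k -> sinc idx -> c (map s idx) = b.

Lemma sinc_tail i0 rest : sinc (i0 :: rest) -> sinc rest /\ forall i, In i rest -> i0 < i.
Proof.
  intro Hs. split.
  - intros i j h hj. apply (Hs (S i) (S j)); simpl; lia.
  - intros i Hi. apply In_nth with (d := 0) in Hi as (p & hp & <-).
    apply (Hs 0 (S p)); simpl; lia.
Qed.

Theorem ramsey : forall k, RamseyP k.
Proof.
  induction k as [|k IH]; intro c.
  - exists (fun i => i). split. intros a b h; auto. exists (c []).
    intros idx Hl _. destruct idx; [reflexivity|discriminate].
  - assert (IH' : forall c', exists p : (nat -> nat) * bool, smono (fst p) /\
        forall idx, length idx = k -> sinc idx -> c' (map (fst p) idx) = snd p).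
    { intro c'. destruct (IH c') as (s & Hs & b & Hb). exists (s, b); auto. }
    set (pick := fun c' => proj1_sig (constructive_indefinite_description _ (IH' c'))).
    assert (Hpick : forall c', smono (fst (pick c')) /\
        forall idx, length idx = k -> sinc idx -> c' (map (fst (pick c')) idx) = snd (pick c')).
    { intro c'. unfold pick. destruct constructive_indefinite_description; auto. }
    set (ctau := fun (t : nat -> nat) (s : list nat) => c (t 0 :: map (fun i => t (S i)) s)).
    set (tau := fix tau n := match n with 0 => (fun i : nat => i)
                 | S n => fun i => tau n (S (fst (pick (ctau (tau n))) i)) end).
    set (sg := fun n => fst (pick (ctau (tau n)))).
    set (bb := fun n => snd (pick (ctau (tau n)))).
    assert (Htau : forall n i, tau (S n) i = tau n (S (sg n i))) by reflexivity.
    assert (Hsg : forall n, smono (sg n)) by (intro n; apply Hpick).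
    assert (Hbb : forall n idx, length idx = k -> sinc idx -> ctau (tau n) (map (sg n) idx) = bb n)
      by (intro n; apply Hpick).
    assert (Hmt : forall n, smono (tau n)).
    { induction n. intros a b h; simpl; auto. intros a b h. rewrite !Htau.
      apply IHn. specialize (Hsg n a b h). lia. }
    set (Mk := fun n => fix Mk d := match d with 0 => (fun i : nat => i)
                 | S d => fun i => Mk d (S (sg (n + d) i)) end).
    assert (HMk : forall n d i, tau (n + d) i = tau n (Mk n d i)).
    { intros n d. induction d; intro i. rewrite Nat.add_0_r; reflexivity.
      rewrite Nat.add_succ_r, Htau, IHd. reflexivity. }
    assert (HMm : forall n d, smono (Mk n d)).
    { intros n d. induction d. intros a b h; simpl; auto.
      intros a b h. simpl. apply IHd. specialize (Hsg (n + d) a b h). lia. }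
    assert (HM0 : forall n d d', d < d' -> Mk n d 0 < Mk n d' 0).
    { intros n d d' h. induction h.
      - simpl. apply HMm. lia.
      - simpl. eapply Nat.lt_le_trans. exact IHh.
        apply smono_le; auto. lia. }
    destruct (inf_pigeon bb) as (b & rho & Hrho & Hrb).
    exists (fun j => tau (rho j) 0). split.
    + intros a a' h. specialize (Hrho a a' h).
      replace (rho a') with (rho a + (rho a' - rho a)) by lia. rewrite HMk.
      apply Hmt. replace 0 with (Mk (rho a) 0 0) at 1 by reflexivity. apply HM0. lia.
    + exists b. intros idx Hl Hs. destruct idx as [|i0 rest]; [discriminate|].
      simpl in Hl. injection Hl as Hl.
      destruct (sinc_tail i0 rest Hs) as [Hsr Hgt].
      set (n := rho i0).
      set (idx' := map (fun i => Mk (S n) (rho i - S n) 0) rest).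
      assert (Hmap : map (fun i => tau (rho i) 0) rest =
                     map (fun x => tau n (S x)) (map (sg n) idx')).
      { unfold idx'. rewrite !map_map. apply map_ext_in. intros i Hi.
        assert (n < rho i) by (apply Hrho, Hgt; auto).
        replace (rho i) with (S n + (rho i - S n)) at 1 by lia. rewrite HMk, Htau. reflexivity. }
      simpl. rewrite Hmap. rewrite <- (Hrb i0). fold n.
      change (ctau (tau n) (map (sg n) idx') = bb n). apply Hbb.
      * unfold idx'. rewrite length_map; auto.
      * intros p p' hp hp'. unfold idx' in *. rewrite length_map in hp'.
        rewrite !nth_map_lt by lia. apply HM0.
        assert (h1 : nth p rest 0 < nth p' rest 0) by (apply Hsr; auto).
        assert (h2 : i0 < nth p rest 0) by (apply Hgt, nth_In; lia).
        pose proof (Hrho _ _ h1). pose proof (Hrho _ _ h2). fold n in H0. lia.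
Qed.

Lemma firstn_len_app (l r : list nat) : firstn (length l) (l ++ r) = l.
Proof. induction l; simpl; auto. f_equal; auto. Qed.

Lemma F_not_to_Lam k H : 1 <= k -> ~ contains_Komega H -> hom (Fk k) (Lam H) -> False.
Proof.
  intros Hk HK (f & Hfv & Hfa).
  set (P := fun s => dec (f (code s))).
  set (c := fun s => Nat.ltb (length (P (firstn k s))) (length (P (tl s)))).
  destruct (ramsey (S k) c) as (sg & Hsg & b & Hb).
  set (W := fun i => map sg (seq i k)).
  assert (HWi : forall i, incr k (W i)).
  { intro i. split. unfold W; rewrite length_map, length_seq; auto.
    intros a a' h h'. unfold W. rewrite !nth_map_lt by (rewrite length_seq; lia).
    rewrite !seq_nth by lia. apply Hsg; lia. }
  destruct k as [|k']; [lia|].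
  assert (HWup : forall i, up (W i) (W (S i))).
  { intro i. exists (sg (S i + k')). unfold W. rewrite seq_S, map_app. simpl. reflexivity. }
  assert (HWne : forall i, W i <> W (S i)).
  { intros i E. assert (nth 0 (W i) 0 = nth 0 (W (S i)) 0) by (rewrite E; auto).
    unfold W in H0. simpl in H0. specialize (Hsg i (S i) ltac:(lia)). lia. }
  set (Q := fun i => P (W i)).
  assert (HQ : forall i, clq H (Q i) /\ clq H (Q (S i)) /\ comp (Q i) (Q (S i)) /\ Q i <> Q (S i)).
  { intro i. assert (Ha : Fadj (S k') (code (W i)) (code (W (S i)))).
    { apply Fadj_intro; auto. }
    apply Hfa in Ha. change (ladj H (f (code (W i))) (f (code (W (S i))))) in Ha. unfold Q, P.
    rewrite <- (code_dec (f (code (W i)))), <- (code_dec (f (code (W (S i))))) in Ha.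
    apply ladj_code; auto. }
  assert (HQb : forall i, Nat.ltb (length (Q i)) (length (Q (S i))) = b).
  { intro i. rewrite <- (Hb (seq i (S (S k')))).
    - unfold c. unfold Q.
      assert (E1 : firstn (S k') (map sg (seq i (S (S k')))) = W i).
      { unfold W. rewrite (seq_S (S k') i), map_app.
        pose proof (firstn_len_app (map sg (seq i (S k'))) [sg (i + S k')]) as FL.
        rewrite length_map, length_seq in FL. exact FL. }
      rewrite E1. reflexivity.
    - apply length_seq.
    - intros a a' h h'. rewrite length_seq in h'. rewrite !seq_nth by lia. lia. }
  assert (Hneq : forall i, length (Q i) <> length (Q (S i))).
  { intros i E. destruct (HQ i) as (_ & _ & h3 & h4). apply h4, comp_len_eq; auto. }
  destruct b.
  - assert (Hlt : forall i, length (Q i) < length (Q (S i))).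
    { intro i. specialize (HQb i). apply Nat.ltb_lt; auto. }
    assert (Hpre : forall i, prefix (Q i) (Q (S i))).
    { intro i. destruct (HQ i) as (_ & _ & [h|h] & _); auto.
      apply prefix_len in h. specialize (Hlt i). lia. }
    assert (Hpre2 : forall i d, prefix (Q i) (Q (i + d))).
    { intros i d. induction d. rewrite Nat.add_0_r; apply prefix_refl.
      rewrite Nat.add_succ_r. eapply prefix_trans; eauto. }
    apply HK. apply (chain_Komega H Q).
    + intro i; apply HQ.
    + intros i j. destruct (Nat.le_ge_cases i j); unfold comp; [left|right].
      * replace j with (i + (j - i)) by lia. apply Hpre2.
      * replace i with (j + (i - j)) by lia. apply Hpre2.
    + intro n. exists (S n). clear -Hlt. induction n. specialize (Hlt 0). lia.
      specialize (Hlt (S n)). lia.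
  - assert (Hgt : forall i, length (Q (S i)) < length (Q i)).
    { intro i. specialize (HQb i). apply Nat.ltb_ge in HQb. specialize (Hneq i). lia. }
    assert (forall i, length (Q i) + i <= length (Q 0)).
    { induction i. lia. specialize (Hgt i). lia. }
    specialize (H0 (S (length (Q 0)))). lia.
Qed.

Definition Sx x := tl (dec x).
Definition radj u v := In u (Sx v) \/ In v (Sx u).
Definition tvert x := forall a b, In a (Sx x) -> In b (Sx x) -> ~ radj a b.
Definition tadj u v := tvert u /\ tvert v /\ u <> v /\ radj u v.

Lemma tadj_sym x y : tadj x y -> tadj y x.
Proof. unfold tadj, radj. intros (h1 & h2 & h3 & h4). split; auto. split; auto. split; auto. tauto. Qed.
Lemma tadj_irrefl x : ~ tadj x x.
Proof. intros (_ & _ & h & _). auto. Qed.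
Lemma tadj_vert x y : tadj x y -> tvert x.
Proof. intros (h & _); auto. Qed.

Definition T : graph := Graph tvert tadj tadj_sym tadj_irrefl tadj_vert.

Lemma Sx_lt a x : In a (Sx x) -> a < x.
Proof.
  unfold Sx. intro h. rewrite <- (code_dec x). destruct (dec x) as [|hd r]; simpl in h. tauto.
  pose proof (In_code_lt a r h). pose proof (code_gt hd r). lia.
Qed.

Lemma radj_lt u v : radj u v -> u < v -> In u (Sx v).
Proof. intros [h|h] hl; auto. apply Sx_lt in h. lia. Qed.

Lemma T_tri_max a b c : tadj a c -> tadj b c -> tadj a b -> a < c -> b < c -> False.
Proof.
  intros (_ & hc & _ & r1) (_ & _ & _ & r2) (_ & _ & _ & r3) l1 l2.
  apply (hc a b); auto; apply radj_lt; auto.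
Qed.

Lemma T_trianglefree a b c : tadj a b -> tadj b c -> tadj a c -> False.
Proof.
  intros h1 h2 h3.
  pose proof (tadj_sym _ _ h1). pose proof (tadj_sym _ _ h2). pose proof (tadj_sym _ _ h3).
  assert (n1 : a <> b) by (destruct h1 as (_ & _ & ? & _); auto).
  assert (n2 : b <> c) by (destruct h2 as (_ & _ & ? & _); auto).
  assert (n3 : a <> c) by (destruct h3 as (_ & _ & ? & _); auto).
  destruct (Nat.lt_total a c) as [l1|[l1|l1]]; [|contradiction|];
  destruct (Nat.lt_total b c) as [l2|[l2|l2]]; try contradiction;
  destruct (Nat.lt_total a b) as [l3|[l3|l3]]; try contradiction.
  all: first [ eapply (T_tri_max a b c); eauto; lia
             | eapply (T_tri_max a c b); eauto; lia
             | eapply (T_tri_max b c a); eauto; lia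
             | lia ].
Qed.

Lemma T_Komega_free : ~ contains_Komega T.
Proof.
  intros (g & _ & _ & Ha).
  apply (T_trianglefree (g 0) (g 1) (g 2)); apply Ha; lia.
Qed.

Definition trianglefree G := forall a b c, adj G a b -> adj G b c -> adj G a c -> False.

Lemma T_univ G : trianglefree G -> hom G T.
Proof.
  intro TF.
  set (adjb := fun m n => if excluded_middle_informative (adj G m n) then true else false).
  assert (Hadjb : forall m n, adjb m n = true <-> adj G m n).
  { intros m n. unfold adjb. destruct excluded_middle_informative; split; auto; discriminate. }
  set (E := fun n => filter (fun m => adjb m n) (seq 0 n)).
  assert (HE : forall m n, In m (E n) <-> m < n /\ adj G m n).
  { intros m n. unfold E. rewrite filter_In, in_seq, Hadjb. split; intros [? ?]; split; auto; lia. }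
  set (fl := fix fl n := match n with 0 => []
     | S n => fl n ++ [code (n :: map (fun m => nth m (fl n) 0) (E n))] end).
  assert (Hfl : forall n, fl (S n) = fl n ++ [code (n :: map (fun m => nth m (fl n) 0) (E n))])
    by reflexivity.
  assert (Hlen : forall n, length (fl n) = n).
  { induction n; auto. rewrite Hfl, length_app, IHn; simpl; lia. }
  set (f := fun n => nth n (fl (S n)) 0).
  assert (Hnth : forall n m, m < n -> nth m (fl n) 0 = f m).
  { induction n; intros m h. lia. destruct (Nat.eq_dec m n) as [->|h']. reflexivity.
    rewrite Hfl, app_nth1 by (rewrite Hlen; lia). apply IHn; lia. }
  assert (Hf : forall n, f n = code (n :: map f (E n))).
  { intro n. unfold f at 1. rewrite Hfl, app_nth2 by (rewrite Hlen; lia). rewrite Hlen, Nat.sub_diag.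
    cbn [nth]. f_equal. f_equal. apply map_ext_in. intros m Hm. apply Hnth. apply HE in Hm. lia. }
  assert (Hinj : forall n n', f n = f n' -> n = n').
  { intros n n' E'. rewrite (Hf n), (Hf n') in E'. apply code_inj in E'. congruence. }
  assert (HS : forall n, Sx (f n) = map f (E n)).
  { intro n. unfold Sx. rewrite Hf, dec_code. reflexivity. }
  assert (HIn : forall m n, In (f m) (Sx (f n)) <-> m < n /\ adj G m n).
  { intros m n. rewrite HS, <- HE. split.
    - intro h. apply in_map_iff in h as (x & hx & hx'). apply Hinj in hx. subst; auto.
    - intro h. apply in_map; auto. }
  assert (Hv : forall n, tvert (f n)).
  { intros n a b ha hb hr. rewrite HS in ha, hb.
    apply in_map_iff in ha as (m & <- & hm). apply in_map_iff in hb as (m' & <- & hm').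
    apply HE in hm as [_ hm]. apply HE in hm' as [_ hm'].
    destruct hr as [hr|hr]; apply HIn in hr as [_ hr].
    - apply (TF m m' n); auto.
    - apply (TF m' m n); auto. }
  exists f. split.
  - intros x _. apply Hv.
  - intros x y h. split; [apply Hv|split; [apply Hv|split]].
    + intro E'. apply Hinj in E'. subst. apply (adj_irrefl G y h).
    + destruct (Nat.lt_total x y) as [l|[l|l]].
      * left. apply HIn; auto.
      * subst. exfalso; apply (adj_irrefl G y h).
      * right. apply HIn. split; auto. apply adj_sym; auto.
Qed.

Definition c5adj x y := x < 5 /\ y < 5 /\ (y = S x \/ x = S y \/ (x = 0 /\ y = 4) \/ (x = 4 /\ y = 0)).
Lemma c5_sym x y : c5adj x y -> c5adj y x.
Proof. unfold c5adj; lia. Qed.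
Lemma c5_irrefl x : ~ c5adj x x.
Proof. unfold c5adj; lia. Qed.
Lemma c5_vert x y : c5adj x y -> x < 5.
Proof. unfold c5adj; lia. Qed.
Definition C5 : graph := Graph (fun x => x < 5) c5adj c5_sym c5_irrefl c5_vert.

Lemma C5_tf : trianglefree C5.
Proof. intros a b c; simpl; unfold c5adj; lia. Qed.

Lemma C5_nonbip : ~ bipartite C5.
Proof.
  intros [col Hc]. simpl in Hc.
  assert (h01 := Hc 0 1 ltac:(unfold c5adj; lia)).
  assert (h12 := Hc 1 2 ltac:(unfold c5adj; lia)).
  assert (h23 := Hc 2 3 ltac:(unfold c5adj; lia)).
  assert (h34 := Hc 3 4 ltac:(unfold c5adj; lia)).
  assert (h40 := Hc 4 0 ltac:(unfold c5adj; lia)).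
  destruct (col 0), (col 1), (col 2), (col 3), (col 4); congruence.
Qed.

Lemma bip_hom G H : hom G H -> bipartite H -> bipartite G.
Proof.
  intros (f & _ & Hf) [c Hc]. exists (fun x => c (f x)). intros x y h. apply Hc, Hf; auto.
Qed.

Lemma T_nonbip : ~ bipartite T.
Proof. intro B. apply C5_nonbip. apply bip_hom with T; auto. apply T_univ, C5_tf. Qed.

Definition k3vert o x := o <= x <= o + 2.
Definition k3adj o x y := k3vert o x /\ k3vert o y /\ x <> y.
Lemma k3_sym o x y : k3adj o x y -> k3adj o y x.
Proof. unfold k3adj; intros (h1 & h2 & h3); split; auto. Qed.
Lemma k3_irrefl o x : ~ k3adj o x x.
Proof. unfold k3adj; intros (h1 & h2 & h3); auto. Qed.
Lemma k3_vert o x y : k3adj o x y -> k3vert o x.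
Proof. unfold k3adj; intros (h1 & h2 & h3); auto. Qed.
Definition K3 o : graph := Graph (k3vert o) (k3adj o) (k3_sym o) (k3_irrefl o) (k3_vert o).

Lemma K3_GRA o : GRA_omega (K3 o).
Proof.
  split.
  - apply (triangle_nonbip (K3 o) o (o+1) (o+2)); simpl; unfold k3adj, k3vert; lia.
  - intros (g & Hv & Hi & _). simpl in Hv. unfold k3vert in Hv.
    pose proof (Hv 0). pose proof (Hv 1). pose proof (Hv 2). pose proof (Hv 3).
    pose proof (Hi 0 1 ltac:(lia)). pose proof (Hi 0 2 ltac:(lia)). pose proof (Hi 0 3 ltac:(lia)).
    pose proof (Hi 1 2 ltac:(lia)). pose proof (Hi 1 3 ltac:(lia)). pose proof (Hi 2 3 ltac:(lia)).
    lia.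
Qed.

Lemma K3_hom o G a b c : adj G a b -> adj G b c -> adj G a c -> hom (K3 o) G.
Proof.
  intros h1 h2 h3.
  exists (fun x => if x =? o then a else if x =? o + 1 then b else c). split.
  - intros x _. destruct (x =? o), (x =? o + 1); eapply adj_vert; eauto.
    apply adj_sym; eauto.
  - intros x y (hx & hy & hne). unfold k3vert in *.
    destruct (Nat.eqb_spec x o), (Nat.eqb_spec x (o+1)), (Nat.eqb_spec y o), (Nat.eqb_spec y (o+1));
      try lia; auto using adj_sym.
    all: try (exfalso; lia).
Qed.

Lemma hom_comp A B C : hom A B -> hom B C -> hom A C.
Proof.
  intros (f & f1 & f2) (g & g1 & g2). exists (fun x => g (f x)). split; auto.
Qed.

Lemma bip_to_Lam G H u : vert H u -> bipartite G -> hom G (Lam H).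
Proof.
  intros hu [c Hc]. exists (fun x => if c x then code [] else code [u]). split.
  - intros x _. destruct (c x); [exists []; split; auto using clq_nil | exists [u]; split; auto using clq_single].
  - intros x y h. specialize (Hc x y h). simpl.
    destruct (c x), (c y); try congruence.
    + apply ladj_nil_single; auto.
    + apply ladj_sym, ladj_nil_single; auto.
Qed.

Lemma main_one G1 : GRA_omega G1 -> exists G, GRA_omega G /\ independent G G1.
Proof.
  intros [NB NK].
  assert (Hedge : exists u v, adj G1 u v).
  { apply NNPP; intro Hno. apply NB. exists (fun _ => true). intros x y h. exfalso; apply Hno; eauto. }
  destruct Hedge as (u & v & huv).
  assert (hu : vert G1 u) by (eapply adj_vert; eauto).
  destruct (classic (hom G1 (Lam G1))) as [Hh|Hh].
  - destruct (nonbip_oddwalk G1 NB) as (m & w & Hw & Hodd).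
    set (k := 2 * (m + 3) + 1).
    exists (Fk k). split; [split|split].
    + intro B. apply (F_not_to_Lam k G1); auto. lia. apply bip_to_Lam with u; auto.
    + intros (g & _ & _ & Ha).
      apply (F_no_short_odd k 3 (fun i => match i with 0 => g 0 | 1 => g 1 | 2 => g 2 | _ => g 0 end)).
      * unfold k; lia.
      * split; auto. intros i hi. destruct i as [|[|[|]]]; try lia; apply Ha; lia.
      * exists 1; lia.
    + intro Hf. apply (F_not_to_Lam k G1); auto. lia. eapply hom_comp; eauto.
    + intros (f & Hf). apply (F_no_short_odd k m (fun i => f (w i))); auto.
      unfold k; lia. apply hom_cwalk with G1; auto.
  - exists (Lam G1). split; [split|split].
    + apply (Lam_nonbip G1 u v huv).
    + apply Lam_Komega_free; auto.
    + intro Hf. apply NK, Lam_diag; auto.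
    + auto.
Qed.

Lemma T_GRA : GRA_omega T.
Proof. split. apply T_nonbip. apply T_Komega_free. Qed.

Lemma T_neq_K3 o : T <> K3 o.
Proof.
  intro E. set (x := code [o + 3]).
  assert (Hx : vert T x).
  { intros a b ha. unfold Sx, x in ha. rewrite dec_code in ha. simpl in ha. tauto. }
  rewrite E in Hx. simpl in Hx. unfold k3vert, x in Hx.
  pose proof (code_gt (o + 3) []). lia.
Qed.

Lemma K3_neq o o' : o <> o' -> o + 3 <= o' \/ o' + 3 <= o -> K3 o <> K3 o'.
Proof.
  intros h h' E. assert (Hx : vert (K3 o) o) by (simpl; unfold k3vert; lia).
  rewrite E in Hx. simpl in Hx. unfold k3vert in Hx. lia.
Qed.

Theorem corollary2 (t : nat) (ht : 0 < t) :
  (forall Gs : nat -> graph,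
     (forall i j, i < t -> j < t -> i <> j -> Gs i <> Gs j) ->
     (forall i, i < t -> GRA_omega (Gs i)) ->
     exists G, GRA_omega G /\ (forall i, i < t -> independent G (Gs i)))
  <-> t = 1.
Proof.
  split.
  - intro Hi. destruct (Nat.eq_dec t 1) as [|Ht]; auto. exfalso.
    set (Gs := fun i => match i with 0 => T | S j => K3 (3 * j) end).
    destruct (Hi Gs) as (G & [GNB GNK] & Hind).
    + intros i j _ _ hij. destruct i as [|i], j as [|j]; simpl.
      * lia.
      * apply T_neq_K3.
      * intro E; symmetry in E; revert E; apply T_neq_K3.
      * apply K3_neq; lia.
    + intros i _. destruct i; simpl. apply T_GRA. apply K3_GRA.
    + destruct (classic (exists a b c, adj G a b /\ adj G b c /\ adj G a c)) as [Htr|Htr].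
      * destruct Htr as (a & b & c & h1 & h2 & h3).
        destruct (Hind 1 ltac:(lia)) as [_ Hn]. apply Hn. simpl. apply K3_hom with a b c; auto.
      * destruct (Hind 0 ltac:(lia)) as [Hn _]. apply Hn. simpl. apply T_univ.
        intros a b c h1 h2 h3. apply Htr; exists a, b, c; auto.
  - intros -> Gs _ HG. destruct (main_one (Gs 0) (HG 0 ltac:(lia))) as (G & HGG & Hind).
    exists G. split; auto. intros i hi. replace i with 0 by lia. auto.
Qed.
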